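(* For $g\in GL_d(\mathbb{Q})$ and $R\ge0$ let $B(g,R)=\{h\in GL_d(\mathbb{Q}) : d(g,h)\le R\}$. Then there exists a constant $C>0$ such that for all $g\in GL_d(\mathbb{Q})$ and all $R\ge0$, $|B(g,R)|\le Ce^{CR}$.
   Context: $\mathcal{P}$ is the set of primes together with $\infty$; $\mathbb{Q}_\infty=\mathbb{R}$. For $v\in\mathbb{Q}_p^d$, $|v|_p=\max_i|v_i|_p$ if $p$ prime ($|\cdot|_p$ the $p$-adic absolute value) and the Euclidean norm if $p=\infty$; $\|g\|_p=\sup_{|v|_p=1}|gv|_p$. $d_p(g,h)=\ln^+\|g^{-1}h\|_p+\ln^+\|h^{-1}g\|_p$ and, for $g,h\in GL_d(\mathbb{Q})$, $d(g,h)=\sum_{p\in\mathcal{P}}d_p(g,h)$. $|\cdot|$ denotes cardinality. *)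

(* Defs.v *)
From HB Require Import structures.
From mathcomp Require Import all_boot all_order all_algebra.
From mathcomp Require Import all_classical all_reals all_analysis.
Set Implicit Arguments. Unset Strict Implicit. Unset Printing Implicit Defensive.
Import Order.TTheory GRing.Theory Num.Theory.
Local Open Scope ring_scope.
Local Open Scope classical_set_scope.

Section Defs.
Variable R : realType.

Definition lnp (x : R) : R := Num.max 0 (ln x).

Definition padic_abs (p : nat) (x : rat) : R :=
  if x == 0 then 0
  else (p%:R ^+ logn p `|denq x|%N) / (p%:R ^+ logn p `|numq x|%N).

Definition padic_vnorm (p : nat) (d : nat) (v : 'cV[rat]_d) : R :=
  \big[Num.max/0]_(i < d) padic_abs p (v i ord0).

(* ||g||_p = sup_{|v|_p = 1} |g v|_p  (v ranging over Q^d, dense in Q_p^d) *)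
Definition padic_opnorm (p : nat) (d : nat) (g : 'M[rat]_d) : R :=
  sup [set padic_vnorm p (g *m v) | v in [set v : 'cV[rat]_d | padic_vnorm p v = 1]].

Definition eucl_norm (d : nat) (v : 'cV[R]_d) : R :=
  Num.sqrt (\sum_(i < d) (v i ord0) ^+ 2).

Definition inf_opnorm (d : nat) (g : 'M[rat]_d) : R :=
  sup [set eucl_norm (map_mx ratr g *m v) | v in [set v : 'cV[R]_d | eucl_norm v = 1]].

Definition dist_p (p : nat) (d : nat) (g h : 'M[rat]_d) : R :=
  lnp (padic_opnorm p (invmx g *m h)) + lnp (padic_opnorm p (invmx h *m g)).

Definition dist_inf (d : nat) (g h : 'M[rat]_d) : R :=
  lnp (inf_opnorm (invmx g *m h)) + lnp (inf_opnorm (invmx h *m g)).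

Definition dist (d : nat) (g h : 'M[rat]_d) : R :=
  dist_inf g h + limn (fun N => \sum_(0 <= p < N | prime p) dist_p p g h).

End Defs.

(* Main.v *)
Require Import Defs.
From HB Require Import structures.
From mathcomp Require Import all_boot all_order all_algebra.
From mathcomp Require Import all_classical all_reals all_analysis.
From mathcomp Require Import zify ring lra.
Import Order.TTheory GRing.Theory Num.Theory.
Local Open Scope ring_scope.

Definition pint (p : nat) (x : rat) := ~~ (p %| `|denq x|)%N.

Lemma denq_div_dvd (n d : int) : d != 0 -> (`|denq (n%:~R / d%:~R)| %| `|d|)%N.
Proof.
move=> dn0; have := den_fracq (n, d); rewrite fracqE /= dn0 => ->.
rewrite absz_nat; apply/dvdn_div; exact: dvdn_gcdr.
Qed.

Lemma pint_frac p (n d : int) : d != 0 -> ~~ (p %| `|d|)%N -> pint p (n%:~R / d%:~R).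
Proof.
move=> dn0 hp; apply/negP => /dvdn_trans /(_ (denq_div_dvd n _ dn0)); exact/negP.
Qed.

Lemma pint_int p (n : int) : prime p -> pint p n%:~R.
Proof.
move=> pp; rewrite /pint denq_int /= dvdn1; apply/negP => /eqP p1.
by move: pp; rewrite p1.
Qed.

Lemma pintE p x : pint p x -> x = (numq x)%:~R / (denq x)%:~R /\ denq x != 0 /\ ~~ (p %| `|denq x|)%N.
Proof. by move=> h; rewrite divq_num_den denq_neq0. Qed.

Lemma pintD p x y : prime p -> pint p x -> pint p y -> pint p (x + y).
Proof.
move=> pp /pintE [ex [dx hx]] /pintE [ey [dy hy]].
have -> : x + y = (numq x * denq y + numq y * denq x)%:~R / (denq x * denq y)%:~R.
  rewrite {1}ex {1}ey !rmorphD !rmorphM /=; field.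
  by rewrite !intr_eq0 dx dy.
apply: pint_frac; first by rewrite mulf_neq0.
by rewrite abszM Euclid_dvdM // negb_or hx hy.
Qed.

Lemma pintM p x y : prime p -> pint p x -> pint p y -> pint p (x * y).
Proof.
move=> pp /pintE [ex [dx hx]] /pintE [ey [dy hy]].
have -> : x * y = (numq x * numq y)%:~R / (denq x * denq y)%:~R.
  rewrite {1}ex {1}ey !rmorphM /=; field.
  by rewrite !intr_eq0 dx dy.
apply: pint_frac; first by rewrite mulf_neq0.
by rewrite abszM Euclid_dvdM // negb_or hx hy.
Qed.

Lemma pint_sum p (I : Type) (r : seq I) (P : pred I) (F : I -> rat) : prime p ->
  (forall i, P i -> pint p (F i)) -> pint p (\sum_(i <- r | P i) F i).
Proof.
move=> pp h; apply: (big_ind (pint p)) => //; first by have := @pint_int p 0 pp; rewrite mulr0z.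
by move=> a b; apply: pintD.
Qed.


Section Padic.
Variable R : realType.

Lemma padic_abs_ge0 p x : 0 <= padic_abs R p x.
Proof.
rewrite /padic_abs; case: eqP => // _; apply: divr_ge0; apply: exprn_ge0; exact: ler0n.
Qed.

Lemma padic_abs_leX p x : prime p -> padic_abs R p x <= (p ^ logn p `|denq x|)%:R.
Proof.
move=> pp; rewrite /padic_abs; case: eqP => _; first exact: ler0n.
rewrite natrX ler_pdivrMr ?exprn_gt0 ?ltr0n ?prime_gt0 //.
rewrite ler_peMr ?exprn_ge0 ?ler0n // exprn_ege1 // ler1n prime_gt0 //.
Qed.

Lemma padic_abs_le1 p x : prime p -> pint p x -> padic_abs R p x <= 1.
Proof.
move=> pp hx; apply: (le_trans (padic_abs_leX p x pp)).
by rewrite logn_coprime ?expn0 // prime_coprime.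
Qed.

Lemma padic_abs_den p x : prime p -> (p %| `|denq x|)%N ->
  padic_abs R p x = (p ^ logn p `|denq x|)%:R.
Proof.
move=> pp hd; rewrite /padic_abs.
have xn0 : x != 0.
  apply/negP => /eqP x0; move: hd; rewrite x0 /= dvdn1 => /eqP p1.
  by move: pp; rewrite p1.
rewrite (negPf xn0) (@logn_coprime p `|numq x|) ?expn0 ?divr1 ?natrX //.
rewrite prime_coprime //; apply/negP => hn.
have := coprime_num_den x; rewrite /coprime => /eqP cg.
have : (p %| gcdn `|numq x| `|denq x|)%N by rewrite dvdn_gcd hn.
by rewrite cg dvdn1 => /eqP p1; move: pp; rewrite p1.
Qed.

Lemma padic_abs_pint p x : prime p -> padic_abs R p x <= 1 -> pint p x.
Proof.
move=> pp; apply: contraLR; rewrite negbK => hd.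
rewrite padic_abs_den // -ltNge ltr1n.
apply: (@leq_trans p); first exact: prime_gt1.
have p0 := prime_gt0 pp; rewrite -{1}(expn1 p) leq_pexp2l //.
rewrite logn_gt0 mem_primes pp hd andbT.
by rewrite absz_gt0 denq_neq0.
Qed.

Lemma padic_abs_scale p x n : prime p -> (0 < n)%N -> pint p (n%:R * x) ->
  padic_abs R p x <= n%:R.
Proof.
move=> pp n0 hy; apply: (le_trans (padic_abs_leX p x pp)); rewrite ler_nat.
set y := n%:R * x in hy.
have ex : x = (numq y)%:~R / (n%:Z * denq y)%:~R.
  rewrite numqE rmorphM /= /y -[(n%:Z)%:~R]/(n%:R : rat); field.
  by rewrite intr_eq0 denq_neq0 pnatr_eq0 -lt0n n0.
have hdv : (`|denq x| %| n * `|denq y|)%N.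
  rewrite {1}ex; have := @denq_div_dvd (numq y) (n%:Z * denq y).
  rewrite abszM absz_nat; apply; rewrite mulf_neq0 ?denq_neq0 //.
  by rewrite eqz_nat -lt0n.
have hl : (logn p `|denq x| <= logn p n)%N.
  apply: (leq_trans (dvdn_leq_log p _ hdv)).
    by rewrite muln_gt0 n0 absz_gt0 denq_neq0.
  rewrite lognM // ?absz_gt0 ?denq_neq0 //.
  by rewrite (@logn_coprime p `|denq y|) ?addn0 // prime_coprime.
apply: (leq_trans _ (dvdn_leq n0 (pfactor_dvdnn p n))).
by rewrite leq_pexp2l ?prime_gt0.
Qed.

End Padic.
Section PadicMx.
Variable R : realType.
Variable d : nat.

Lemma padic_abs1 p : prime p -> padic_abs R p 1 = 1.
Proof. move=> pp; rewrite /padic_abs oner_eq0 /=. by rewrite (logn1 p) expr0 divr1. Qed.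

Lemma padic_abs0 p : padic_abs R p 0 = 0.
Proof. by rewrite /padic_abs eqxx. Qed.

Lemma vnorm_ge0 p (v : 'cV[rat]_d) : 0 <= padic_vnorm R p v.
Proof.
rewrite /padic_vnorm; elim/big_ind: _ => // [a b ha _|i _]; first by rewrite le_max ha.
exact: padic_abs_ge0.
Qed.

Lemma vnorm_delta p (j : 'I_d) : prime p -> padic_vnorm R p (delta_mx j ord0) = 1.
Proof.
move=> pp; apply/le_anti/andP; split.
  apply: bigmax_le => // i _; rewrite mxE eqxx andbT.
  by case: eqP => _; rewrite ?padic_abs1 ?padic_abs0.
rewrite /padic_vnorm (bigmaxD1 j) //= mxE !eqxx /= padic_abs1 //.
by rewrite le_max lexx.
Qed.

Lemma vnorm_le1 p (v : 'cV[rat]_d) j : padic_abs R p (v j ord0) <= padic_vnorm R p v.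
Proof. rewrite /padic_vnorm; exact: le_bigmax. Qed.

Lemma padic_opnorm_le1 p (m : 'M[rat]_d) : prime p -> (forall i j, pint p (m i j)) ->
  padic_opnorm R p m <= 1.
Proof.
move=> pp hm; rewrite /padic_opnorm.
set A := (X in sup X).
have [-> |] := eqVneq A set0; first by rewrite sup0 ler01.
move/set0P => A0; apply: ge_sup => // _ [v /= v1 <-].
apply: bigmax_le => // i _; apply: padic_abs_le1 => //.
rewrite mxE; apply: pint_sum => // j _; apply: pintM => //.
apply: (@padic_abs_pint R) => //; rewrite -v1; exact: vnorm_le1.
Qed.

Lemma padic_opnorm_ge p (m : 'M[rat]_d) i j : prime p ->
  padic_abs R p (m i j) <= padic_opnorm R p m.
Proof.
move=> pp; rewrite /padic_opnorm.
set A := (X in sup X).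
have hA : has_ubound A.
  pose D := (\prod_(k : 'I_d * 'I_d) `|denq (m k.1 k.2)|)%N.
  have D0 : (0 < D)%N by rewrite prodn_gt0 // => k; rewrite absz_gt0 denq_neq0.
  exists D%:R => _ [v /= v1 <-].
  apply: bigmax_le => // i' _; apply: padic_abs_scale => //.
  rewrite mxE mulr_sumr; apply: pint_sum => // j' _.
  rewrite mulrA; apply: pintM => //; last first.
    apply: (@padic_abs_pint R) => //; rewrite -v1; exact: vnorm_le1.
  rewrite /D (bigD1 (i', j')) //= natrM mulrAC.
  have -> : (`|denq (m i' j')|%:R : rat) = (denq (m i' j'))%:~R.
    by rewrite -[in RHS]absz_denq.
  rewrite [_ * m i' j']mulrC -numqE pmulrn; apply: pintM => //; exact: pint_int.
apply: (le_trans _ (ub_le_sup hA _)); last first.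
  by exists (delta_mx j ord0); [exact: vnorm_delta|].
apply: (le_trans _ (vnorm_le1 _ _ i)).
by rewrite -colE mxE.
Qed.

End PadicMx.
Section InfMx.
Variable R : realType.
Variable d : nat.

Lemma sqr_le_of_norm (x S : R) : `|x| <= S -> x ^+ 2 <= S ^+ 2.
Proof.
move=> h; have h0 := normr_ge0 x.
rewrite -[x ^+ 2]ger0_norm ?sqr_ge0 // normrX.
apply: lerXn2r; rewrite ?nnegrE //; exact: le_trans h.
Qed.

Lemma eucl_entry (v : 'cV[R]_d) i : `|v i ord0| <= eucl_norm v.
Proof.
rewrite /eucl_norm -sqrtr_sqr; apply: ler_wsqrtr.
rewrite (bigD1 i) //= lerDl; apply: sumr_ge0 => k _; exact: sqr_ge0.
Qed.

Lemma eucl_delta (j : 'I_d) : eucl_norm (delta_mx j ord0 : 'cV[R]_d) = 1.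
Proof.
rewrite /eucl_norm (bigD1 j) //= mxE !eqxx /= big1 ?addr0 ?expr1n ?sqrtr1 //.
by move=> k kj; rewrite mxE (negPf kj) /= expr0n.
Qed.

Lemma inf_opnorm_ge (m : 'M[rat]_d) i j : `|ratr (m i j) : R| <= inf_opnorm R m.
Proof.
rewrite /inf_opnorm; set M := map_mx ratr m; set A := (X in sup X).
have hA : has_ubound A.
  exists (Num.sqrt (\sum_i (\sum_j `|M i j|) ^+ 2)) => _ [v /= v1 <-].
  rewrite /eucl_norm; apply: ler_wsqrtr; apply: ler_sum => i' _.
  apply: sqr_le_of_norm; rewrite mxE.
  apply: (le_trans (ler_norm_sum _ _ _)); apply: ler_sum => j' _.
  rewrite normrM; apply: ler_piMr => //; rewrite -v1; exact: eucl_entry.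
apply: (le_trans _ (ub_le_sup hA _)); last first.
  by exists (delta_mx j ord0); [exact: eucl_delta|].
apply: (le_trans _ (eucl_entry _ i)).
by rewrite -colE !mxE.
Qed.

End InfMx.
Section Dist.
Variable R : realType.
Variable d : nat.
Variables g h : 'M[rat]_d.

Let k := invmx g *m h.
Let k' := invmx h *m g.
Let u := fun N => \sum_(0 <= p < N | prime p) dist_p R p g h.

Lemma lnp_ge0 (x : R) : 0 <= lnp x.
Proof. by rewrite /lnp le_max lexx. Qed.

Lemma distp_ge0 p : 0 <= dist_p R p g h.
Proof. by rewrite /dist_p addr_ge0 ?lnp_ge0. Qed.

Lemma distinf_ge0 : 0 <= dist_inf R g h.
Proof. by rewrite /dist_inf addr_ge0 ?lnp_ge0. Qed.

Lemma u_nd : nondecreasing_seq u.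
Proof.
move=> n m nm; rewrite /u (big_cat_nat (leq0n n) nm) /= lerDl.
by apply: sumr_ge0 => p _; exact: distp_ge0.
Qed.

Lemma lnp_opnorm_le1 p (m : 'M[rat]_d) : prime p -> (forall i j, pint p (m i j)) ->
  lnp (padic_opnorm R p m) = 0.
Proof.
move=> pp hm; apply/le_anti; rewrite lnp_ge0 andbT /lnp ge_max lexx /=.
by apply: ln_le0; exact: padic_opnorm_le1.
Qed.

Lemma zero_after : exists B, forall p, (B <= p)%N -> prime p -> dist_p R p g h = 0.
Proof.
exists (\sum_(k0 : 'I_d * 'I_d) (`|denq (k k0.1 k0.2)| + `|denq (k' k0.1 k0.2)|)).+1%N.
move=> p Bp pp.
have hm : forall (m : 'M[rat]_d) i j,
    (`|denq (m i j)| < p)%N -> pint p (m i j).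
  move=> m i j lt; rewrite /pint; apply/negP => /dvdn_leq.
  by rewrite absz_gt0 denq_neq0 => /(_ isT); rewrite leqNgt lt.
rewrite /dist_p !lnp_opnorm_le1 ?addr0 // => i j; apply: hm;
  apply: (leq_trans _ Bp); rewrite ltnS (bigD1 (i, j)) //= -/k -/k'; lia.
Qed.

Lemma u_le_lim N : u N <= limn u.
Proof.
apply: nondecreasing_cvgn_le; first exact: u_nd.
apply: nondecreasing_is_cvgn; first exact: u_nd.
have [B hB] := zero_after.
exists (u B) => _ [n _ <-].
have [nB|Bn] := leqP n B; first exact: u_nd.
rewrite /u (big_cat_nat (leq0n B) (ltnW Bn)) /=.
have -> : \sum_(B <= p < n | prime p) dist_p R p g h = 0.
  apply: big1_seq => p /andP [pp]; rewrite mem_index_iota => /andP [Bp _]; exact: hB.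
by rewrite addr0.
Qed.

Lemma lim_ge0 : 0 <= limn u.
Proof. by apply: le_trans (u_le_lim 0); rewrite /u big_geq. Qed.

Lemma den_bound i j : (`|denq (k i j)|%:R : R) <= expR (limn u).
Proof.
set n := (`|denq (k i j)|)%N.
have n0 : (0 < n)%N by rewrite absz_gt0 denq_neq0.
apply: (@le_trans _ _ (expR (u n.+1))); last by rewrite ler_expR u_le_lim.
rewrite -{1}(partnT n0) /partn /u expR_sum natr_prod.
rewrite [X in X <= _]big_mkcond [X in _ <= X]big_mkcond /=.
apply: ler_prod => p _.
case: ifP => pr; last first.
  have -> : logn p n = 0%N by rewrite /logn pr.
  by rewrite expn0 lexx ler01.
rewrite ler0n /=.
have le1 : 1 <= expR (dist_p R p g h) by rewrite -expR0 ler_expR distp_ge0.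
have [l0|lp] := eqVneq (logn p n) 0%N; first by rewrite l0 expn0.
have pn : (p %| n)%N.
  by move: lp; rewrite -lt0n logn_gt0 mem_primes => /and3P [].
rewrite -(@padic_abs_den R p (k i j) pr pn).
set o := padic_opnorm R p k.
have ho : padic_abs R p (k i j) <= o by exact: padic_opnorm_ge.
apply: (le_trans ho).
have [oneg|opos] := lerP o 0; first by apply: le_trans le1; apply: le_trans oneg ler01.
rewrite -{1}(lnK (x := o)) ?posrE // ler_expR /dist_p.
apply: (@le_trans _ _ (lnp o)); first by rewrite /lnp le_max lexx orbT.
by rewrite lerDl lnp_ge0.
Qed.

Lemma entry_bound i j : `|ratr (k i j) : R| <= expR (dist_inf R g h).
Proof.
set o := inf_opnorm R k.
have ho : `|ratr (k i j) : R| <= o by exact: inf_opnorm_ge.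
apply: (le_trans ho).
have [oneg|opos] := lerP o 0; first by apply: le_trans oneg (expR_ge0 _).
rewrite -{1}(lnK (x := o)) ?posrE // ler_expR /dist_inf.
apply: (@le_trans _ _ (lnp o)); first by rewrite /lnp le_max lexx orbT.
by rewrite lerDl lnp_ge0.
Qed.

Lemma num_den_bound i j (r : R) : dist R g h <= r ->
  (`|numq (k i j)|%:R : R) <= expR r /\ (`|denq (k i j)|%:R : R) <= expR r.
Proof.
move=> hr.
have e1 : expR (dist_inf R g h) * expR (limn u) <= expR r.
  rewrite -expRD ler_expR; exact: hr.
split; last first.
  apply: (le_trans (den_bound i j)); apply: le_trans e1.
  rewrite ler_peMl ?expR_ge0 // -expR0 ler_expR; exact: distinf_ge0.
apply: le_trans e1.
have -> : (`|numq (k i j)|%:R : R) = `|ratr (k i j) : R| * `|denq (k i j)|%:R.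
  rewrite !natr_absz !intr_norm -normrM; congr `|_|.
  by rewrite -[LHS]ratr_int numqE rmorphM /= ratr_int.
apply: ler_pM; [exact: normr_ge0|exact: ler0n|exact: entry_bound|exact: den_bound].
Qed.
End Dist.

Lemma aux1 (z : int) (N : nat) : (`|z| <= N)%N -> (`|(z + N%:Z)%R| < (N + N).+1)%N.
Proof. move=> h. lia. Qed.
Lemma aux2 (z : int) (N : nat) : (`|z| <= N)%N -> ((`|(z + N%:Z)%R|%N)%:Z - N%:Z)%R = z.
Proof. move=> h. lia. Qed.

Theorem lemma4p2 (R : realType) (d : nat) :
  exists C : R, 0 < C /\
    forall (g : 'M[rat]_d) (r : R), g \in unitmx -> 0 <= r ->
      forall s : seq 'M[rat]_d, uniq s ->
        (forall h, h \in s -> h \in unitmx /\ dist R g h <= r) ->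
        (size s)%:R <= C * expR (C * r).
Proof.
set n2 := (d * d)%N.
exists (6 ^ n2 + 2 * n2)%N%:R; split.
  by rewrite ltr0n addn_gt0 expn_gt0.
move=> g r gu r0 s us hs.
set E := expR r.
have E1 : 1 <= E by rewrite /E -expR0 ler_expR.
have E0 : 0 <= E by apply: le_trans E1.
set N := Num.truncn E.
have NE : (N%:R : R) <= E by rewrite truncn_le.
pose T := {ffun 'I_d * 'I_d -> 'I_(N + N).+1 * 'I_N.+1}.
pose F : T -> 'M[rat]_d := fun f =>
  \matrix_(i, j) (((((f (i, j)).1 : nat)%:Z - N%:Z)%:~R : rat) / (((f (i, j)).2 : nat)%:R)).
have inF : forall h, h \in s -> invmx g *m h \in codom F.
  move=> h /hs [_ dh]; apply/codomP.
  set k := invmx g *m h.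
  have hb : forall i j, (`|numq (k i j)| <= N)%N /\ (`|denq (k i j)| <= N)%N.
    move=> i j; have [h1 h2] := @num_den_bound R d g h i j r dh.
    by rewrite /N !truncn_ge_nat.
  exists [ffun ij => (inord `|numq (k ij.1 ij.2) + N%:Z|, inord `|denq (k ij.1 ij.2)|)].
  apply/matrixP => i j; rewrite [RHS]mxE ffunE /=.
  have [b1 b2] := hb i j.
  rewrite !inordK; last 2 first.
  - by rewrite ltnS.
  - exact: aux1.
  rewrite aux2 //.
  have -> : (`|denq (k i j)|%:R : rat) = (denq (k i j))%:~R.
    by rewrite -[in RHS]absz_denq.
  by rewrite divq_num_den.
have hsize : (size s <= #|T|)%N.
  rewrite -(size_map (mulmx (invmx g))) -(size_codom F).
  apply: uniq_leq_size; last by move=> _ /mapP [h hin ->]; exact: inF.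
  by rewrite (map_inj_uniq (can_inj (mulKVmx gu))).
have cT : #|T| = (((N + N).+1 * N.+1) ^ n2)%N.
  by rewrite card_ffun; rewrite !card_prod !card_ord.
apply: (@le_trans _ _ (((N + N).+1 * N.+1) ^ n2)%N%:R).
  by rewrite ler_nat -cT.
apply: (@le_trans _ _ ((6 ^ n2)%N%:R * expR ((2 * n2)%N%:R * r))).
  rewrite natrX expRM_natl exprM natrX -exprMn.
  apply: lerXn2r; rewrite ?nnegrE ?ler0n ?mulr_ge0 ?expR_ge0 //.
  rewrite natrM -/E.
  have h1 : ((N + N).+1%:R : R) <= 3 * E by rewrite -addn1 !natrD; lra.
  have h2 : (N.+1%:R : R) <= 2 * E by rewrite -addn1 natrD; lra.
  have -> : (6 : R) * E ^+ 2 = (3 * E) * (2 * E) by rewrite expr2; ring.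
  by apply: ler_pM => //; apply: ler0n.
apply: ler_pM; rewrite ?ler0n ?expR_ge0 //.
  by rewrite ler_nat leq_addr.
rewrite ler_expR ler_wpM2r // ler_nat leq_addl //.
Qed.
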